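(* Let $\mathcal C$ be a collective choice problem satisfying Generic Finite Alternatives. For the amendment procedure with $T$ rounds and initial default $x^0$, the equilibrium outcome correspondence satisfies $f_T(x^0)=\{\phi^T(x^0)\}$. Moreover: (a) There exists a pure-strategy equilibrium in which (i) the agenda setter always proposes $\phi(x)$ when the current default is $x$, and (ii) each voter $i$ votes to approve proposal $y$ in round $t$ if and only if $\phi^{T-t}(y)\succsim_i\phi^{T-t}(x^{t-1})$, where $x^{t-1}$ is the current default. (b) For an initial default $x^0$, $f_T(x^0)=\{x^0\}$ if and only if $x^0\in E$. (c) If $T\ge |X|-1$, then $\bigcup_{x^0\in X}f_T(x^0)=E$.
   Context: Collective choice problem: voters $N=\{1,\dots,n\}$ ($n$ odd) and a non-voting agenda setter $A$ choose from a policy space $X$; each player $i\in N\cup\{A\}$ has a complete, transitive preference $\succsim_i$ with utility representation $u_i$. $x\succ_M y$ means a strict majority of voters strictly prefer $x$ to $y$. Generic Finite Alternatives: $X$ is finite and all preferences are antisymmetric. Define $M(x)=\{y\in X: y\succ_M x \text{ or } y=x\}$, the agenda setter's favorite improvement map $\phi:X\to X$ by $\{\phi(x)\}=\arg\max_{y\in M(x)}u_A(y)$, $\phi^t$ its $t$-fold iterate ($\phi^0$ the identity), and $E=\{x\in X: x=\phi(x)\}$. Amendment procedure with $T$ rounds: initial default $x^0$; in each round $t$ the agenda setter proposes $a^t\in X$, voted against the default $x^{t-1}$ by simple majority; $x^t=a^t$ if it passes and $x^t=x^{t-1}$ otherwise; $x^T$ is implemented. Strategies may depend on the full history and may be mixed.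 Equilibrium: subgame perfect equilibrium with as-if-pivotal voting (at histories where passage leads to continuation outcome $x$ and rejection to $y$ regardless of the vote composition, voters with a strict preference between $x$ and $y$ vote for the option leading to the preferred one). $f_T(x^0)$ denotes the set of policies implemented with positive probability in some equilibrium of the $T$-round game with initial default $x^0$. *)

(* Defs.v *)
From HB Require Import structures.
From mathcomp Require Import all_boot all_order all_algebra.
From mathcomp Require Import reals.
Set Implicit Arguments. Unset Strict Implicit. Unset Printing Implicit Defensive.
Import Order.TTheory GRing.Theory Num.Theory.
Local Open Scope ring_scope.

Section Amendment.
Variables (R : realType) (X : finType) (n : nat).
(* utilities of the voters ('I_n) and of the agenda setter *)
Variables (u : 'I_n -> X -> R) (uA : X -> R).

Definition maj (y x : X) : bool := (n < 2 * #|[set i | (u i x < u i y)%R]|)%N.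

Definition Mset (x : X) : pred X := [pred y | maj y x || (y == x)].

(* favourite improvement map: the u_A-maximiser of M(x) (unique when u_A is injective) *)
Definition phi (x : X) : X := [arg max_(y > x in Mset x) uA y]%O.

Definition Eset : {set X} := [set x | phi x == x].

Definition vprofile := {ffun 'I_n -> bool}.
(* one completed round: (proposal, vote profile) *)
Definition history := seq (X * vprofile).

Definition passes (v : vprofile) : bool := (n < 2 * #|[set i | v i]|)%N.

Definition default (x0 : X) (h : history) : X :=
  foldl (fun x p => if passes p.2 then p.1 else x) x0 h.

(* behaviour strategy profile: setter mixes over proposals at each history;
   voter i approves proposal a at history h with probability sV i h a *)
Record strat := Strat {
  sA : history -> X -> R ;
  sV : 'I_n -> history -> X -> R }.

Definition valid_sA (f : history -> X -> R) : Prop :=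
  forall h, (forall x, 0 <= f h x) /\ \sum_x f h x = 1.
Definition valid_sV (g : history -> X -> R) : Prop :=
  forall h a, 0 <= g h a <= 1.
Definition valid (s : strat) : Prop :=
  valid_sA (sA s) /\ forall i, valid_sV (sV s i).

Definition vprob (s : strat) (h : history) (a : X) (v : vprofile) : R :=
  \prod_i (if v i then sV s i h a else 1 - sV s i h a).

(* distribution of the implemented policy, starting at history h
   (beginning of a round) with k rounds remaining *)
Fixpoint node_val (x0 : X) (s : strat) (h : history) (k : nat) : X -> R :=
  match k with
  | 0 => fun x => (x == default x0 h)%:R
  | k'.+1 => fun x =>
      \sum_a sA s h a *
        \sum_(v : vprofile) vprob s h a v * node_val x0 s (rcons h (a, v)) k' x
  end.

(* distribution of the implemented policy at the voting node following
   proposal a at history h, with k rounds remaining after this vote *)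
Definition vote_val (x0 : X) (s : strat) (h : history) (a : X) (k : nat) : X -> R :=
  fun x => \sum_(v : vprofile) vprob s h a v * node_val x0 s (rcons h (a, v)) k x.

Definition EU (w : X -> R) (d : X -> R) : R := \sum_x d x * w x.

Definition setA (s : strat) (f : history -> X -> R) : strat := Strat f (sV s).
Definition setV (s : strat) (i : 'I_n) (g : history -> X -> R) : strat :=
  Strat (sA s) (fun j => if j == i then g else sV s j).

(* subgame perfection: no profitable deviation (to any strategy) by any
   player in any subgame, i.e. at any history of a round t <= T, either
   before the proposal or after any proposal *)
Definition SPE (x0 : X) (T : nat) (s : strat) : Prop :=
  valid s /\
  (forall h : history, (size h < T)%N ->
     forall f, valid_sA f ->
       EU uA (node_val x0 (setA s f) h (T - size h)) <= EU uA (node_val x0 s h (T - size h)) /\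
       forall a, EU uA (vote_val x0 (setA s f) h a (T - size h - 1))
                   <= EU uA (vote_val x0 s h a (T - size h - 1))) /\
  (forall h : history, (size h < T)%N ->
     forall i g, valid_sV g ->
       EU (u i) (node_val x0 (setV s i g) h (T - size h))
         <= EU (u i) (node_val x0 s h (T - size h)) /\
       forall a, EU (u i) (vote_val x0 (setV s i g) h a (T - size h - 1))
                   <= EU (u i) (vote_val x0 s h a (T - size h - 1))).

(* as-if-pivotal voting: if passage leads (for every vote composition) to the
   continuation outcome x and rejection (for every vote composition) to y,
   voters with a strict preference vote for the option leading to the
   preferred one *)
Definition as_if_pivotal (x0 : X) (T : nat) (s : strat) : Prop :=
  forall h : history, (size h < T)%N -> forall a x y : X,
    (forall v, passes v -> forall z,
        node_val x0 s (rcons h (a, v)) (T - size h - 1) z = (z == x)%:R) ->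
    (forall v, ~~ passes v -> forall z,
        node_val x0 s (rcons h (a, v)) (T - size h - 1) z = (z == y)%:R) ->
    forall i, (u i y < u i x -> sV s i h a = 1) /\ (u i x < u i y -> sV s i h a = 0).

Definition equilibrium (x0 : X) (T : nat) (s : strat) : Prop :=
  SPE x0 T s /\ as_if_pivotal x0 T s.

Definition fT (T : nat) (x0 : X) (x : X) : Prop :=
  exists s, equilibrium x0 T s /\ 0 < node_val x0 s [::] T x.

End Amendment.

(* Main.v *)
Require Import Defs.
From HB Require Import structures.
From mathcomp Require Import all_boot all_order all_algebra.
From mathcomp Require Import reals.
From mathcomp Require Import zify.
Set Implicit Arguments. Unset Strict Implicit. Unset Printing Implicit Defensive.
Import Order.TTheory GRing.Theory Num.Theory.
Local Open Scope ring_scope.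

Section Proof.
Variables (R : realType) (X : finType) (n : nat).
Variables (u : 'I_n -> X -> R) (uA : X -> R).
Hypothesis oddn : odd n.
Hypothesis uinj : forall i, injective (u i).
Hypothesis uAinj : injective uA.

Local Notation phi := (phi u uA).
Local Notation maj := (maj u).
Local Notation Mset := (Mset u).

Lemma phiP y : phi y \in Mset y /\ forall z, z \in Mset y -> uA z <= uA (phi y).
Proof.
rewrite /Defs.phi.
case: arg_maxP => [|i Pi Hi]; first by rewrite inE /= eqxx orbT.
by split.
Qed.

Lemma Mset_refl y : y \in Mset y.
Proof. by rewrite inE /= eqxx orbT. Qed.

Lemma phi_ge y : uA y <= uA (phi y).
Proof. by have [_ H] := phiP y; apply: H; apply: Mset_refl. Qed.

Lemma phi_gt y : phi y != y -> uA y < uA (phi y).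
Proof.
move=> ne; rewrite lt_neqAle phi_ge andbT.
by apply: contra ne => /eqP /uAinj E; rewrite -E.
Qed.

Definition sinc (x y : X) : vprofile n := [ffun i => u i y <= u i x].

Definition out (x y : X) : X := if passes (sinc x y) then x else y.

Lemma passes_sinc x y : x != y -> passes (sinc x y) = maj x y.
Proof.
move=> ne; rewrite /passes /Defs.maj; congr (_ < 2 * _)%N.
apply: eq_card => i; rewrite !inE ffunE le_eqVlt.
case: eqP => // /uinj E; by move/eqP: ne; rewrite E.
Qed.

Lemma out_M x y : out x y \in Mset y.
Proof.
rewrite /out; case: ifP => P; last exact: Mset_refl.
case: (eqVneq x y) => [->|ne]; first exact: Mset_refl.
by rewrite inE /= -passes_sinc // P.
Qed.

Lemma out_id x y : x \in Mset y -> out x y = x.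
Proof.
rewrite /out; case: (eqVneq x y) => [->|ne]; first by case: ifP.
by rewrite inE /= (negbTE ne) orbF -passes_sinc // => ->.
Qed.

Lemma out_phi k d : out (iter k phi (phi d)) (iter k phi d) = iter k.+1 phi d.
Proof. by rewrite -iterSr iterS out_id //; case: (phiP (iter k phi d)). Qed.

Lemma out_le k a d : uA (out (iter k phi a) (iter k phi d)) <= uA (iter k.+1 phi d).
Proof. by rewrite iterS; case: (phiP (iter k phi d)) => _; apply; apply: out_M. Qed.


Lemma sum_vprob (s : strat R X n) h a : \sum_v vprob s h a v = 1.
Proof.
rewrite /vprob.
rewrite -(bigA_distr_bigA (fun i (b : bool) => if b then sV s i h a else 1 - sV s i h a)) /=.
by apply: big1 => i _; rewrite big_bool /= addrC subrK.
Qed.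

Lemma vprob_pt (s : strat R X n) h a (v0 : vprofile n) :
  (forall i, sV s i h a = (v0 i)%:R) -> forall v, vprob s h a v = (v == v0)%:R.
Proof.
move=> H v; rewrite /vprob; case: eqP => [->|ne].
  by apply: big1 => i _; rewrite H; case: (v0 i); rewrite ?subr0.
have [i Hi] : exists i, v i != v0 i.
  apply/existsP; apply: contraT; rewrite negb_exists => /forallP A.
  by case: ne; apply/ffunP => i; move: (A i); rewrite negbK => /eqP.
rewrite (bigD1 i) //= H; move: Hi; case: (v i); case: (v0 i) => //= _; first by rewrite mul0r.
by rewrite subrr mul0r.
Qed.

Lemma sum_pt (J : finType) (j0 : J) (F : J -> R) : \sum_j (j == j0)%:R * F j = F j0.
Proof.
rewrite (bigD1 j0) //= eqxx mul1r big1 ?addr0 // => j /negbTE ->; by rewrite mul0r.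
Qed.

Lemma EU_pt (w : X -> R) x : EU w (fun z => (z == x)%:R) = w x.
Proof. exact: sum_pt. Qed.

Lemma EU_sum (w : X -> R) (J : finType) (c : J -> R) (F : J -> X -> R) :
  EU w (fun z => \sum_j c j * F j z) = \sum_j c j * EU w (F j).
Proof.
rewrite /EU; under eq_bigr do rewrite mulr_suml.
rewrite exchange_big; apply: eq_bigr => j _; rewrite mulr_sumr.
by apply: eq_bigr => z _; rewrite mulrA.
Qed.

Lemma EU_node (w : X -> R) x0 (s : strat R X n) h k :
  EU w (node_val x0 s h k.+1) = \sum_a sA s h a * EU w (vote_val x0 s h a k).
Proof. exact: (EU_sum w (sA s h) (fun a => vote_val x0 s h a k)). Qed.

Lemma EU_vote (w : X -> R) x0 (s : strat R X n) h a k :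
  EU w (vote_val x0 s h a k) =
  \sum_v vprob s h a v * EU w (node_val x0 s (rcons h (a, v)) k).
Proof. exact: (EU_sum w (vprob s h a) (fun v => node_val x0 s (rcons h (a, v)) k)). Qed.

Lemma default_rcons x0 (h : history X n) a v :
  default x0 (rcons h (a, v)) = if passes v then a else default x0 h.
Proof. by rewrite /default -cats1 foldl_cat. Qed.

Lemma EU_le (w : X -> R) (J : finType) (c : J -> R) (F G : J -> R) :
  (forall j, 0 <= c j) -> (forall j, F j <= G j) -> \sum_j c j * F j <= \sum_j c j * G j.
Proof. by move=> c0 FG; apply: ler_sum => j _; apply: ler_wpM2l. Qed.

Lemma sum_const_le (J : finType) (c : J -> R) (F : J -> R) M :
  (forall j, 0 <= c j) -> \sum_j c j = 1 -> (forall j, c j != 0 -> F j <= M) ->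
  \sum_j c j * F j <= M.
Proof.
move=> c0 c1 FM; apply: le_trans (_ : \sum_j c j * M <= M).
  apply: ler_sum => j _; case: (eqVneq (c j) 0) => [->|nz]; first by rewrite !mul0r.
  by apply: ler_wpM2l => //; apply: FM.
by rewrite -mulr_suml c1 mul1r.
Qed.


Definition sstar x0 T : strat R X n :=
  @Strat R X n (fun h a => (a == phi (default x0 h))%:R)
    (fun i h a => (u i (iter (T - size h - 1) phi (default x0 h))
                   <= u i (iter (T - size h - 1) phi a))%R%:R).

Lemma sV_star x0 T k (h : history X n) i a : (k.+1 + size h)%N = T ->
  sV (sstar x0 T) i h a = (sinc (iter k phi a) (iter k phi (default x0 h)) i)%:R.
Proof.
move=> E; rewrite /= ffunE; have -> : (T - size h - 1 = k)%N by rewrite -E; lia.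
by [].
Qed.

Lemma iter_if k (b : bool) (a d : X) :
  iter k phi (if b then a else d) = if b then iter k phi a else iter k phi d.
Proof. by case: b. Qed.

Lemma vote_gen x0 (s : strat R X n) h a k (v0 : vprofile n) (F : vprofile n -> X) :
  (forall i, sV s i h a = (v0 i)%:R) ->
  (forall v z, node_val x0 s (rcons h (a, v)) k z = (z == F v)%:R) ->
  forall z, vote_val x0 s h a k z = (z == F v0)%:R.
Proof.
move=> HV HN z; rewrite /vote_val.
under eq_bigr do rewrite (vprob_pt HV) HN.
exact: sum_pt.
Qed.

Lemma node_star x0 T k h : (k + size h)%N = T ->
  forall z, node_val x0 (sstar x0 T) h k z = (z == iter k phi (default x0 h))%:R.
Proof.
elim: k h => [|k IH] h E z; first by [].
have V : forall a z, vote_val x0 (sstar x0 T) h a k z =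
    (z == out (iter k phi a) (iter k phi (default x0 h)))%:R.
  move=> a z'.
  rewrite (@vote_gen x0 _ h a k (sinc (iter k phi a) (iter k phi (default x0 h)))
     (fun v => iter k phi (if passes v then a else default x0 h))).
  - by rewrite iter_if.
  - by move=> i; apply: sV_star.
  move=> v z''; rewrite IH; last by rewrite size_rcons addnS.
  by rewrite default_rcons.
transitivity (\sum_a sA (sstar x0 T) h a * vote_val x0 (sstar x0 T) h a k z); first by [].
under eq_bigr do rewrite V.
by rewrite (sum_pt (phi (default x0 h)) (fun a => (z == out (iter k phi a) (iter k phi (default x0 h)))%:R)) out_phi.
Qed.

Lemma vote_star x0 T k h a : (k.+1 + size h)%N = T ->
  forall z, vote_val x0 (sstar x0 T) h a k z =
    (z == out (iter k phi a) (iter k phi (default x0 h)))%:R.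
Proof.
move=> E z.
rewrite (@vote_gen x0 _ h a k (sinc (iter k phi a) (iter k phi (default x0 h)))
   (fun v => iter k phi (if passes v then a else default x0 h))).
- by rewrite iter_if.
- by move=> i; apply: sV_star.
move=> v z''; rewrite node_star; last by rewrite size_rcons addnS.
by rewrite default_rcons.
Qed.


Lemma passes_mono (v1 v2 : vprofile n) : (forall j, v1 j -> v2 j) -> passes v1 -> passes v2.
Proof.
move=> H; rewrite /passes => P; apply: (leq_trans P); rewrite leq_mul2l /=.
by apply: subset_leq_card; apply/subsetP => j; rewrite !inE; apply: H.
Qed.

Lemma vprob_ge0 (s : strat R X n) h a v :
  (forall j, 0 <= sV s j h a <= 1) -> 0 <= vprob s h a v.
Proof.
move=> H; apply: prodr_ge0 => j _; case: (v j); have /andP[A B] := H j => //.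
by rewrite subr_ge0.
Qed.

Lemma vprob_nz_agree (s : strat R X n) h a i (v0 : vprofile n) v :
  (forall j, j != i -> sV s j h a = (v0 j)%:R) -> vprob s h a v != 0 ->
  forall j, j != i -> v j = v0 j.
Proof.
move=> H nz j ji; apply/eqP; apply: contraNT nz => ne.
rewrite /vprob (bigD1 j) //= H //; apply/eqP.
by move: ne; case: (v j); case: (v0 j) => //= _; rewrite ?subrr mul0r.
Qed.

Lemma pivot_le i (x y : X) (v : vprofile n) :
  (forall j, j != i -> v j = sinc x y j) ->
  u i (if passes v then x else y) <= u i (out x y).
Proof.
move=> H; rewrite /out.
case b: (u i y <= u i x).
  have M : forall j, v j -> sinc x y j.
    move=> j; case: (eqVneq j i) => [->|ne]; first by rewrite ffunE b.
    by rewrite H.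
  case: ifP => Pv; case: ifP => Ps //.
  by rewrite (passes_mono M Pv) in Ps.
have M : forall j, sinc x y j -> v j.
  move=> j; case: (eqVneq j i) => [->|ne]; first by rewrite ffunE b.
  by rewrite H.
have b' : u i x <= u i y by move/negbT: b; rewrite -ltNge => /ltW.
case: ifP => Pv; case: ifP => Ps //.
by rewrite (passes_mono M Ps) in Pv.
Qed.

Section Star.
Variables (x0 : X) (T : nat).
Local Notation s := (sstar x0 T).

Lemma setter_vote f k h a : (k.+1 + size h)%N = T ->
  (forall h', (k + size h')%N = T ->
     EU uA (node_val x0 (setA s f) h' k) <= uA (iter k phi (default x0 h'))) ->
  EU uA (vote_val x0 (setA s f) h a k) <= uA (out (iter k phi a) (iter k phi (default x0 h))).
Proof.
move=> E IH; rewrite EU_vote.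
have HV : forall i, sV (setA s f) i h a =
   (sinc (iter k phi a) (iter k phi (default x0 h)) i)%:R.
  by move=> i; apply: sV_star.
under eq_bigr do rewrite (vprob_pt HV).
rewrite (sum_pt (sinc (iter k phi a) (iter k phi (default x0 h)))
   (fun v => EU uA (node_val x0 (setA s f) (rcons h (a, v)) k))).
apply: le_trans; first by apply: IH; rewrite size_rcons addnS.
by rewrite default_rcons iter_if.
Qed.

Lemma setter_node f : valid_sA f -> forall k h, (k + size h)%N = T ->
  EU uA (node_val x0 (setA s f) h k) <= uA (iter k phi (default x0 h)).
Proof.
move=> vf; elim=> [|k IH] h E; first by rewrite (EU_pt _ (default x0 h)).
rewrite EU_node; have [f0 f1] := vf h.
apply: sum_const_le => // a _.
apply: le_trans; first by apply: setter_vote => //.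
exact: out_le.
Qed.

Lemma voter_vote i g k h a : (forall h a, 0 <= g h a <= 1) -> (k.+1 + size h)%N = T ->
  (forall h', (k + size h')%N = T ->
     EU (u i) (node_val x0 (setV s i g) h' k) <= u i (iter k phi (default x0 h'))) ->
  EU (u i) (vote_val x0 (setV s i g) h a k) <= u i (out (iter k phi a) (iter k phi (default x0 h))).
Proof.
move=> vg E IH; rewrite EU_vote.
have V01 : forall j, 0 <= sV (setV s i g) j h a <= 1.
  move=> j; rewrite /=; case: eqP => _; first exact: vg.
  by case: (u j (iter _ phi (default x0 h)) <= u j (iter _ phi a))%R; rewrite /= ?lexx ?ler01.
have P0 := fun v => vprob_ge0 v V01.
apply: le_trans (_ : \sum_v vprob (setV s i g) h a v *
    u i (iter k phi (if passes v then a else default x0 h)) <= _).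
  apply: ler_sum => v _; apply: ler_wpM2l => //.
  by rewrite -default_rcons; apply: IH; rewrite size_rcons addnS.
apply: sum_const_le; [exact: P0 | exact: sum_vprob | move=> v nz].
rewrite iter_if; apply: pivot_le => j ji.
apply: (vprob_nz_agree (i := i)) nz j ji => j' j'i.
by rewrite /= (negbTE j'i) -(sV_star _ _ _ E).
Qed.

Lemma voter_node i g : (forall h a, 0 <= g h a <= 1) -> forall k h, (k + size h)%N = T ->
  EU (u i) (node_val x0 (setV s i g) h k) <= u i (iter k phi (default x0 h)).
Proof.
move=> vg; elim=> [|k IH] h E; first by rewrite (EU_pt _ (default x0 h)).
rewrite EU_node.
have -> : \sum_a sA (setV s i g) h a * EU (u i) (vote_val x0 (setV s i g) h a k) =
   EU (u i) (vote_val x0 (setV s i g) h (phi (default x0 h)) k) by exact: sum_pt.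
rewrite -out_phi; apply: voter_vote => //.
Qed.

End Star.


Lemma EU_ext (w : X -> R) (F G : X -> R) : (forall z, F z = G z) -> EU w F = EU w G.
Proof. by move=> H; apply: eq_bigr => z _; rewrite H. Qed.

Lemma sum_ind (x : X) : \sum_z (z == x)%:R = 1 :> R.
Proof. by rewrite (bigD1 x) //= eqxx big1 ?addr0 // => z /negbTE ->. Qed.

Lemma passes_all : (0 < n)%N -> passes [ffun _ : 'I_n => true].
Proof.
move=> n0; rewrite /passes.
have -> : [set i | [ffun _ : 'I_n => true] i] = setT by apply/setP => i; rewrite !inE ffunE.
by rewrite cardsT card_ord; lia.
Qed.

Lemma passes_none : ~~ passes [ffun _ : 'I_n => false].
Proof.
rewrite /passes.
have -> : [set i | [ffun _ : 'I_n => false] i] = set0 by apply/setP => i; rewrite !inE ffunE.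
by rewrite cards0.
Qed.

Lemma star_equilibrium x0 T : (0 < n)%N -> equilibrium u uA x0 T (sstar x0 T).
Proof.
move=> n0; split; [split; [split|split]|].
- move=> h; split; last exact: sum_ind.
  by move=> x; rewrite /sstar /=; case: (_ == _); rewrite ?lexx ?ler01.
- move=> i h a; rewrite /sstar /=.
  by case: (u i _ <= u i _)%R; rewrite /= ?lexx ?ler01.
- move=> h hT f vf.
  have E0 : (T - size h + size h)%N = T by lia.
  rewrite (EU_ext _ (node_star x0 E0)) EU_pt; split; first exact: setter_node.
  move=> a; have E1 : ((T - size h - 1).+1 + size h)%N = T by lia.
  rewrite (EU_ext _ (vote_star x0 a E1)) EU_pt; apply: setter_vote => //.
  by move=> h' E'; apply: setter_node.
- move=> h hT i g vg.
  have E0 : (T - size h + size h)%N = T by lia.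
  rewrite (EU_ext _ (node_star x0 E0)) EU_pt; split; first exact: voter_node.
  move=> a; have E1 : ((T - size h - 1).+1 + size h)%N = T by lia.
  rewrite (EU_ext _ (vote_star x0 a E1)) EU_pt; apply: voter_vote => //.
  by move=> h' E'; apply: voter_node.
- move=> h hT a x y Hp Hn i.
  have E1 : ((T - size h - 1).+1 + size h)%N = T by lia.
  have Er : forall v, (T - size h - 1 + size (rcons h (a, v)))%N = T.
    by move=> v; rewrite size_rcons addnS.
  have Hx : x = iter (T - size h - 1) phi a.
    have := Hp _ (passes_all n0) x; rewrite node_star // default_rcons passes_all // eqxx.
    by case: eqP => // _ /esym/eqP; rewrite oner_eq0.
  have Hy : y = iter (T - size h - 1) phi (default x0 h).
    have := Hn _ passes_none y; rewrite node_star // default_rcons (negbTE passes_none) eqxx.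
    by case: eqP => // _ /esym/eqP; rewrite oner_eq0.
  rewrite (sV_star _ _ _ E1) ffunE -Hx -Hy; split => H.
    by rewrite (ltW H).
  by rewrite leNgt H.
Qed.


Lemma avg_max (J : finType) (p F : J -> R) M :
  (forall j, 0 <= p j) -> \sum_j p j = 1 -> (forall j, F j <= M) ->
  M <= \sum_j p j * F j -> forall j, p j != 0 -> F j = M.
Proof.
move=> p0 p1 FM Mle j nz.
have S : \sum_j' p j' * (M - F j') = 0.
  apply/eqP; rewrite eq_le; apply/andP; split; last first.
    by apply: sumr_ge0 => j' _; apply: mulr_ge0 => //; rewrite subr_ge0.
  under eq_bigr do rewrite mulrBr.
  by rewrite sumrB -mulr_suml p1 mul1r subr_le0.
have H0 : forall j', predT j' -> 0 <= p j' * (M - F j').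
  by move=> j' _; apply: mulr_ge0 => //; rewrite subr_ge0.
have /eqP := psumr_eq0P H0 S (i := j) isT.
rewrite mulf_eq0 (negbTE nz) /= subr_eq0 => /eqP ->.
by [].
Qed.


Lemma node_ext x0 k : forall (h : history X n) (s1 s2 : strat R X n),
  (forall h', (size h <= size h')%N -> sA s1 h' = sA s2 h' /\ forall i, sV s1 i h' = sV s2 i h') ->
  forall z, node_val x0 s1 h k z = node_val x0 s2 h k z.
Proof.
elim: k => [|k IH] h s1 s2 H z //=.
have [EA EV] := H h (leqnn _).
rewrite EA; apply: eq_bigr => a _; congr (_ * _); apply: eq_bigr => v _.
rewrite (IH _ s1 s2); last by move=> h' Hh'; apply: H; rewrite size_rcons in Hh'; exact: ltnW.
by congr (_ * _); apply: eq_bigr => i _; rewrite EV.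
Qed.

Section Uniq.
Variables (x0 : X) (T : nat) (s : strat R X n).
Hypothesis eqs : equilibrium u uA x0 T s.

Lemma vote_eq k h : (k.+1 + size h)%N = T ->
  (forall h', (k + size h')%N = T -> forall z,
     node_val x0 s h' k z = (z == iter k phi (default x0 h'))%:R) ->
  forall a z, vote_val x0 s h a k z = (z == out (iter k phi a) (iter k phi (default x0 h)))%:R.
Proof.
move=> E IH a z.
have Er : forall v, (k + size (rcons h (a, v)))%N = T by move=> v; rewrite size_rcons addnS.
have N : forall v z', node_val x0 s (rcons h (a, v)) k z' =
   (z' == iter k phi (if passes v then a else default x0 h))%:R.
  by move=> v z'; rewrite IH // default_rcons.
case: (eqVneq (iter k phi a) (iter k phi (default x0 h))) => [Exy|Nxy].
  have -> : out (iter k phi a) (iter k phi (default x0 h)) = iter k phi a.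
    by rewrite /out Exy; case: ifP.
  rewrite /vote_val; under eq_bigr do rewrite N iter_if -Exy if_same.
  by rewrite -mulr_suml sum_vprob mul1r.
have hT : (size h < T)%N by lia.
have Ek : (T - size h - 1 = k)%N by lia.
have HV : forall i, sV s i h a = (sinc (iter k phi a) (iter k phi (default x0 h)) i)%:R.
  move=> i.
  have [_ AIP] := eqs.
  have := AIP h hT a (iter k phi a) (iter k phi (default x0 h)).
  rewrite Ek => /(_ _ _ i) [].
  - by move=> v Pv z'; rewrite N Pv.
  - by move=> v Pv z'; rewrite N (negbTE Pv).
  move=> H1 H2; rewrite ffunE.
  have ne : u i (iter k phi a) != u i (iter k phi (default x0 h)).
    by apply: contra Nxy => /eqP /uinj ->.
  case: (ltgtP (u i (iter k phi (default x0 h))) (u i (iter k phi a))) => [lt|lt|eq].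
  - by rewrite H1.
  - by rewrite H2.
  - by rewrite eq eqxx in ne.
rewrite (@vote_gen x0 s h a k _ (fun v => iter k phi (if passes v then a else default x0 h)) HV).
- by rewrite iter_if.
by move=> v z'; rewrite N.
Qed.


Lemma node_eq k : forall h, (k + size h)%N = T -> forall z,
  node_val x0 s h k z = (z == iter k phi (default x0 h))%:R.
Proof.
elim: k => [|k IH] h E z; first by [].
have V := vote_eq E IH.
set d := default x0 h.
set tgt := iter k.+1 phi d.
have [[vA _] [SA _]] := eqs.1.
have hT : (size h < T)%N by lia.
have Ek : (T - size h = k.+1)%N by lia.
pose f := fun h' => if h' == h then (fun a => (a == phi d)%:R) else sA s h'.
have vf : valid_sA f.
  move=> h'; rewrite /f; case: eqP => _; last exact: vA.
  by split; [move=> x; rewrite ler0n | exact: sum_ind].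
have [Hle _] := SA h hT f vf; rewrite Ek in Hle.
have Vf : forall a z', vote_val x0 (setA s f) h a k z' = vote_val x0 s h a k z'.
  move=> a z'; apply: eq_bigr => v _; congr (_ * _).
  apply: node_ext => h' Hh'; split => //=.
  rewrite /f; case: eqP => // Eh; move: Hh'; rewrite Eh size_rcons; lia.
have L : EU uA (node_val x0 (setA s f) h k.+1) = uA tgt.
  rewrite EU_node.
  under eq_bigr do rewrite (EU_ext _ (Vf _)) (EU_ext _ (V _)) EU_pt.
  rewrite /= /f eqxx (sum_pt (phi d) (fun a => uA (out (iter k phi a) (iter k phi d)))).
  by rewrite out_phi.
have Rr : EU uA (node_val x0 s h k.+1) =
    \sum_a sA s h a * uA (out (iter k phi a) (iter k phi d)).
  by rewrite EU_node; apply: eq_bigr => a _; rewrite (EU_ext _ (V a)) EU_pt.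
rewrite L Rr in Hle.
have [p0 p1] := vA h.
have Eq := avg_max p0 p1 (fun a => out_le k a d) Hle.
transitivity (\sum_a sA s h a * vote_val x0 s h a k z); first by [].
transitivity (\sum_a sA s h a * (z == tgt)%:R).
  apply: eq_bigr => a _; rewrite V.
  case: (eqVneq (sA s h a) 0) => [->|nz]; first by rewrite !mul0r.
  by rewrite (uAinj (Eq a nz)).
by rewrite -mulr_suml p1 mul1r.
Qed.

End Uniq.


Lemma iter_ge m y : uA (phi y) <= uA (iter m.+1 phi y).
Proof.
elim: m => [|m IH]; first by rewrite lexx.
by rewrite iterS; apply: le_trans IH (phi_ge _).
Qed.

Lemma iter_mono x0 N : (forall j, (j < N)%N -> uA (iter j phi x0) < uA (iter j.+1 phi x0)) ->
  forall j2 j1, (j1 < j2 <= N)%N -> uA (iter j1 phi x0) < uA (iter j2 phi x0).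
Proof.
move=> H; elim=> [|j2 IH] j1 /andP [lt le] //.
case: (ltngtP j1 j2) => [lt'|gt'|->].
- apply: lt_trans (H j2 le); apply: IH; rewrite lt' /=; exact: ltnW.
- exfalso; lia.
- exact: H.
Qed.

Lemma iter_fixpoint x0 T : (#|X| - 1 <= T)%N -> phi (iter T phi x0) = iter T phi x0.
Proof.
move=> hT.
case: (boolP [exists j : 'I_#|X|, phi (iter j phi x0) == iter j phi x0]).
  move/existsP => [j /eqP Hj].
  have jT : (j <= T)%N by have := ltn_ord j; lia.
  by rewrite -(subnK jT) iterD (iter_fix _ Hj).
rewrite negb_exists => /forallP H.
have St : forall j, (j < #|X|)%N -> uA (iter j phi x0) < uA (iter j.+1 phi x0).
  move=> j lj; rewrite iterS; apply: phi_gt; exact: (H (Ordinal lj)).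
pose g := fun j : 'I_#|X|.+1 => iter j phi x0.
have gi : injective g.
  move=> j1 j2 E; apply/val_inj => /=.
  case: (ltngtP j1 j2) => // lt.
    have := iter_mono St (j1 := j1) (j2 := j2); rewrite lt -ltnS ltn_ord => /(_ isT).
    by rewrite /g in E; rewrite E ltxx.
  have := iter_mono St (j1 := j2) (j2 := j1); rewrite lt -ltnS ltn_ord => /(_ isT).
  by rewrite /g in E; rewrite E ltxx.
have := leq_card g gi; rewrite card_ord; lia.
Qed.

Lemma main_all T : (0 < T)%N ->
  (forall x0 x, fT u uA T x0 x <-> x = iter T phi x0) /\
  (forall x0, exists s : strat R X n,
     equilibrium u uA x0 T s /\
     (forall h : history X n, (size h < T)%N ->
        forall a, sA s h a = (a == phi (default x0 h))%:R) /\
     (forall h : history X n, (size h < T)%N -> forall i a,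
        sV s i h a =
          (u i (iter (T - size h - 1) phi (default x0 h))
             <= u i (iter (T - size h - 1) phi a))%R%:R)) /\
  (forall x0, (forall x, fT u uA T x0 x <-> x = x0) <-> x0 \in Eset u uA) /\
  ((#|X| - 1 <= T)%N ->
     forall x, (exists x0, fT u uA T x0 x) <-> x \in Eset u uA).
Proof.
move=> T0; have n0 : (0 < n)%N by apply: odd_gt0.
have M : forall x0 x, fT u uA T x0 x <-> x = iter T phi x0.
  move=> x0 x; split.
    move=> [s [eqs pos]].
    have E : (T + size ([::] : history X n))%N = T by rewrite addn0.
    rewrite (node_eq eqs E) in pos.
    by move: pos; case: eqP => // _; rewrite ltxx.
  move=> ->; exists (sstar x0 T); split; first exact: star_equilibrium.
  have E : (T + size ([::] : history X n))%N = T by rewrite addn0.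
  by rewrite (node_star x0 E) eqxx ltr01.
split; first exact: M.
split.
  move=> x0; exists (sstar x0 T); split; first exact: star_equilibrium.
  by split.
split.
  move=> x0; rewrite inE; split.
    move=> H; have It : iter T phi x0 = x0 by apply/(H _).1/M.
    apply: contraT => ne.
    have := phi_gt ne; case: T T0 It {M H} => // T' _ It.
    by have := iter_ge T' x0; rewrite It => /le_lt_trans H /H; rewrite ltxx.
  move/eqP => Hf x; rewrite M iter_fix //.
move=> hT x; rewrite inE; split.
  by move=> [x0 /M ->]; rewrite iter_fixpoint.
by move/eqP => Hf; exists x; rewrite M iter_fix.
Qed.

End Proof.

Theorem lemma1 (R : realType) (X : finType) (n : nat)
    (u : 'I_n -> X -> R) (uA : X -> R) (T : nat) :
  odd n ->
  (forall i, injective (u i)) ->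
  injective uA ->
  (0 < T)%N ->
  (* main claim: f_T(x0) = {phi^T(x0)} *)
  (forall x0 x, fT u uA T x0 x <-> x = iter T (phi u uA) x0) /\
  (* (a) the described pure-strategy equilibrium *)
  (forall x0, exists s : strat R X n,
     equilibrium u uA x0 T s /\
     (forall h : history X n, (size h < T)%N ->
        forall a, sA s h a = (a == phi u uA (default x0 h))%:R) /\
     (forall h : history X n, (size h < T)%N -> forall i a,
        sV s i h a =
          (u i (iter (T - size h - 1) (phi u uA) (default x0 h))
             <= u i (iter (T - size h - 1) (phi u uA) a))%R%:R)) /\
  (* (b) *)
  (forall x0, (forall x, fT u uA T x0 x <-> x = x0) <-> x0 \in Eset u uA) /\
  (* (c) *)
  ((#|X| - 1 <= T)%N ->
     forall x, (exists x0, fT u uA T x0 x) <-> x \in Eset u uA).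
Proof. by move=> on ui uAi T0; apply: main_all. Qed.
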